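(* For every $\lambda\ge0$ the sequence $\big(\mathbb{E}[e^{-\lambda Z_n}]\big)_{n\ge1}$ is bounded. Moreover, \[ \mathbb{E}[e^{-Z_n}]-1\sim-\frac{\log n}{2n}\quad\text{as } n\to\infty, \] meaning that the ratio of the two sides tends to $1$.
   Context: $Z_n=\frac{T_n}{n}-\log n$, where $T_n=\sum_{i=1}^n\tau_i^n$ with $\tau_1^n,\dots,\tau_n^n$ independent and $\tau_i^n$ geometric on $\{1,2,\dots\}$ with parameter $\frac{n-i+1}{n}$; equivalently $T_n$ is the coupon collector's completion time for $n$ coupons. *)

(* Defs.v *)
From Stdlib Require Import Reals Lra Lia.
From Coquelicot Require Import Coquelicot.
Open Scope R_scope.

Definition geom_pmf (p : R) (k : nat) : R :=
  match k with
  | O => 0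
  | S j => (1 - p) ^ j * p
  end.

(* Parameter of tau_i^n : (n - i + 1) / n, for 1 <= i <= n. *)
Definition cc_param (n i : nat) : R := INR (n - i + 1) / INR n.

(* Law (probability mass function on nat) of tau_1^n + ... + tau_m^n,
   the tau_i^n being independent: iterated convolution of the laws. *)
Fixpoint partial_law (n m : nat) (k : nat) : R :=
  match m with
  | O => if Nat.eqb k 0 then 1 else 0
  | S m' => sum_f_R0 (fun j => partial_law n m' j * geom_pmf (cc_param n (S m')) (k - j)) k
  end.

Definition T_law (n : nat) (k : nat) : R := partial_law n n k.

(* Value of Z_n = T_n / n - log n on the event {T_n = k}. *)
Definition Z_val (n k : nat) : R := INR k / INR n - ln (INR n).

Definition mgf_term (lam : R) (n : nat) (k : nat) : R :=
  T_law n k * exp (- lam * Z_val n k).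

(* E[exp(-lam Z_n)] (as a series; finiteness is asserted separately). *)
Definition mgf_Z (lam : R) (n : nat) : R := Series (mgf_term lam n).

(* Main.v *)
Require Import Defs.
From Stdlib Require Import Reals Lra Lia.
From Coquelicot Require Import Coquelicot.
Open Scope R_scope.

Definition Gf (p x : R) : R := p * x / (1 - (1 - p) * x).

Fixpoint prodG (n m : nat) (x : R) : R :=
  match m with
  | O => 1
  | S m' => prodG n m' x * Gf (cc_param n (S m')) x
  end.

Lemma cc_param_bounds n i : (1 <= i <= n)%nat -> 0 < cc_param n i <= 1.
Proof.
  intros H. unfold cc_param.
  assert (Hn : 0 < INR n) by (apply lt_0_INR; lia).
  assert (H1 : 1 <= INR (n - i + 1)) by (apply (le_INR 1); lia).
  assert (H2 : INR (n - i + 1) <= INR n) by (apply le_INR; lia).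
  split.
  - apply Rdiv_lt_0_compat; lra.
  - apply Rmult_le_reg_r with (INR n); auto. unfold Rdiv. rewrite Rmult_assoc, Rinv_l; lra.
Qed.

Lemma geom_nonneg p k : 0 <= p <= 1 -> 0 <= geom_pmf p k.
Proof.
  intros H. destruct k; simpl. lra. apply Rmult_le_pos; [apply pow_le|]; lra.
Qed.

Lemma pl_nonneg n m k : (m <= n)%nat -> 0 <= partial_law n m k.
Proof.
  revert k. induction m; intros k Hm; simpl.
  - destruct (Nat.eqb k 0); lra.
  - apply cond_pos_sum. intros j. apply Rmult_le_pos. apply IHm; lia.
    apply geom_nonneg. pose proof (cc_param_bounds n (S m)). assert (Hq : (1 <= S m <= n)%nat) by lia; apply cc_param_bounds in Hq; lra.
Qed.

Lemma geom_gf p x : 0 < p <= 1 -> 0 <= x <= 1 ->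
  is_series (fun k => geom_pmf p k * x ^ k) (Gf p x).
Proof.
  intros Hp Hx.
  apply is_series_decr_1.
  assert (Hq : Rabs ((1 - p) * x) < 1).
  { rewrite Rabs_pos_eq. nra. apply Rmult_le_pos; lra. }
  pose proof (is_series_scal_l (p * x) _ _ (is_series_geom _ Hq)) as H.
  match goal with |- is_series _ ?l => replace l with (p * x * / (1 - (1-p)*x)) end.
  - eapply is_series_ext; [|exact H].
    intros k. simpl. unfold scal; simpl; unfold mult; simpl.
    rewrite Rpow_mult_distr. ring.
  - simpl. unfold Gf, plus, opp; simpl. field. nra.
Qed.

Lemma is_series_zero : is_series (fun _ : nat => 0) 0.
Proof.
  assert (Hq : Rabs 0 < 1) by (rewrite Rabs_R0; lra).
  pose proof (is_series_scal_l 0 _ _ (is_series_geom _ Hq)) as H.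
  match goal with |- is_series _ ?l => replace l with (scal 0 (/ (1 - 0))) end.
  eapply is_series_ext; [|exact H]. intros k. unfold scal; simpl; unfold mult; simpl. ring.
  unfold scal; simpl; unfold mult; simpl. ring.
Qed.

Lemma partial_gf n m x : (m <= n)%nat -> 0 <= x <= 1 ->
  is_series (fun k => partial_law n m k * x ^ k) (prodG n m x).
Proof.
  intros Hm Hx. induction m.
  - simpl. apply is_series_decr_1.
    match goal with |- is_series _ ?l => replace l with 0 end.
    + eapply is_series_ext; [|exact is_series_zero]. intros k. simpl. ring.
    + simpl. unfold plus, opp; simpl. ring.
  - assert (Hq : (1 <= S m <= n)%nat) by lia. apply cc_param_bounds in Hq.
    pose proof (is_series_mult_pos _ _ _ _ (IHm ltac:(lia)) (geom_gf _ _ Hq Hx)) as H.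
    simpl prodG.
    eapply is_series_ext; [|apply H].
    + intros k. simpl partial_law. rewrite Rmult_comm, scal_sum.
      apply sum_eq. intros i Hi.
      replace (x ^ k) with (x ^ i * x ^ (k - i)) by (rewrite <- pow_add; f_equal; lia). ring.
    + intros k. apply Rmult_le_pos. apply pl_nonneg; lia. apply pow_le; lra.
    + intros k. apply Rmult_le_pos. apply geom_nonneg; lra. apply pow_le; lra.
Qed.

Lemma exp_INR_mult k a : exp (INR k * a) = exp a ^ k.
Proof.
  induction k. simpl. rewrite Rmult_0_l, exp_0. reflexivity.
  rewrite S_INR, Rmult_plus_distr_r, exp_plus, IHk, Rmult_1_l. simpl. ring.
Qed.

Lemma exp_le x y : x <= y -> exp x <= exp y.
Proof. intros [H|H]. left; apply exp_increasing; auto. subst; lra. Qed.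

Definition xpar (lam : R) (n : nat) : R := exp (- lam / INR n).

Lemma xpar_bounds lam n : 0 <= lam -> (1 <= n)%nat -> 0 < xpar lam n <= 1.
Proof.
  intros Hl Hn. unfold xpar. split. apply exp_pos.
  rewrite <- exp_0. apply exp_le.
  assert (0 < INR n) by (apply lt_0_INR; lia).
  unfold Rdiv. rewrite Ropp_mult_distr_l_reverse. assert (0 <= lam * / INR n) by (apply Rmult_le_pos; [lra | left; apply Rinv_0_lt_compat; lra]). lra.
Qed.

Lemma mgf_series lam n : 0 <= lam -> (1 <= n)%nat ->
  is_series (mgf_term lam n) (exp (lam * ln (INR n)) * prodG n n (xpar lam n)).
Proof.
  intros Hl Hn.
  pose proof (xpar_bounds lam n Hl Hn) as Hx.
  pose proof (is_series_scal_l (exp (lam * ln (INR n))) _ _ (partial_gf n n (xpar lam n) (le_n n) ltac:(lra))) as H.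
  eapply is_series_ext; [|exact H].
  intros k. unfold scal; simpl; unfold mult; simpl.
  unfold mgf_term, T_law, xpar, Z_val. rewrite <- exp_INR_mult.
  assert (0 < INR n) by (apply lt_0_INR; lia).
  replace (- lam * (INR k / INR n - ln (INR n))) with (lam * ln (INR n) + INR k * (- lam / INR n)) by (field; lra).
  rewrite exp_plus. ring.
Qed.

Lemma mgf_Z_eq lam n : 0 <= lam -> (1 <= n)%nat ->
  mgf_Z lam n = exp (lam * ln (INR n)) * prodG n n (xpar lam n).
Proof. intros. apply is_series_unique, mgf_series; auto. Qed.

Definition cpar (lam : R) (n : nat) : R := INR n * (exp (lam / INR n) - 1).

Lemma cpar_ge lam n : (1 <= n)%nat -> lam <= cpar lam n.
Proof.
  intros Hn. unfold cpar. assert (0 < INR n) by (apply lt_0_INR; lia).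
  pose proof (exp_ineq1_le (lam / INR n)).
  apply Rmult_le_compat_l with (r := INR n) in H0; [|lra].
  replace (INR n * (1 + lam / INR n)) with (INR n + lam) in H0 by (field; lra). nra.
Qed.

Lemma INR_q n i : (1 <= i <= n)%nat -> 1 <= INR (n - i + 1).
Proof. intros. apply (le_INR 1). lia. Qed.

Lemma Gf_eq lam n i : 0 <= lam -> (1 <= i <= n)%nat ->
  Gf (cc_param n i) (xpar lam n) = INR (n - i + 1) / (INR (n - i + 1) + cpar lam n).
Proof.
  intros Hl Hi.
  assert (Hn : 0 < INR n) by (apply lt_0_INR; lia).
  pose proof (INR_q n i Hi) as Hq.
  pose proof (cpar_ge lam n ltac:(lia)) as Hc.
  unfold Gf, cc_param, xpar, cpar in *.
  set (q := INR (n - i + 1)) in *.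
  assert (He : 0 < exp (lam / INR n)) by apply exp_pos.
  replace (- lam / INR n) with (- (lam / INR n)) by (field; lra).
  rewrite exp_Ropp.
  set (e := exp (lam / INR n)) in *.
  assert (E1 : 0 < q + INR n * (e - 1)) by lra.
  replace (1 - (1 - q / INR n) * / e) with ((q + INR n * (e - 1)) / (INR n * e)) by (field; lra).
  field. repeat split; try lra.
Qed.

Fixpoint prodF (f : R -> R) (n m : nat) : R :=
  match m with
  | O => 1
  | S m' => prodF f n m' * f (INR (n - m'))
  end.

Fixpoint sumF (f : R -> R) (n m : nat) : R :=
  match m with
  | O => 0
  | S m' => sumF f n m' + f (INR (n - m'))
  end.

Lemma prodG_eq lam n m : 0 <= lam -> (m <= n)%nat ->
  prodG n m (xpar lam n) = prodF (fun q => q / (q + cpar lam n)) n m.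
Proof.
  intros Hl Hm. induction m. reflexivity.
  simpl. rewrite IHm by lia. rewrite Gf_eq by (auto; lia).
  replace (n - S m + 1)%nat with (n - m)%nat by lia. reflexivity.
Qed.

Lemma ln_diff_le a b : 0 < a -> 0 < b -> ln b - ln a <= (b - a) / a.
Proof.
  intros Ha Hb. rewrite <- ln_div by auto.
  pose proof (exp_ineq1_le (b / a - 1)).
  replace ((b - a) / a) with (b / a - 1) by (field; lra).
  rewrite <- (ln_exp (b / a - 1)). apply ln_le.
  apply Rdiv_lt_0_compat; auto. lra.
Qed.

Lemma factor_bound q lam : 1 <= q -> 0 <= lam ->
  q / (q + lam) <= exp (- lam * (ln (q + 1 + lam) - ln (q + lam))).
Proof.
  intros Hq Hl.
  replace (q / (q + lam)) with (exp (ln q - ln (q + lam))).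
  2:{ rewrite <- ln_div by lra. apply exp_ln. apply Rdiv_lt_0_compat; lra. }
  apply exp_le.
  pose proof (ln_diff_le (q + lam) q ltac:(lra) ltac:(lra)) as H1.
  pose proof (ln_diff_le (q + lam) (q + 1 + lam) ltac:(lra) ltac:(lra)) as H2.
  replace ((q - (q + lam)) / (q + lam)) with (- (lam * / (q + lam))) in H1 by (field; lra).
  replace ((q + 1 + lam - (q + lam)) / (q + lam)) with (/ (q + lam)) in H2 by (field; lra).
  assert (lam * (ln (q + 1 + lam) - ln (q + lam)) <= lam * / (q + lam)).
  { apply Rmult_le_compat_l; auto. }
  lra.
Qed.

Lemma prodF_nonneg c n m : 0 <= c -> (m <= n)%nat -> 0 <= prodF (fun q => q / (q + c)) n m.
Proof.
  intros Hc Hm. induction m; simpl. lra.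
  assert (1 <= INR (n - m)) by (apply (le_INR 1); lia).
  apply Rmult_le_pos. apply IHm; lia. apply Rmult_le_pos. lra.
  left. apply Rinv_0_lt_compat. lra.
Qed.

Lemma ratio_mono q a b : 0 <= q -> 0 <= a <= b -> 0 < q + a -> q / (q + b) <= q / (q + a).
Proof.
  intros Hq Hab Hqa. apply Rmult_le_compat_l; auto. apply Rinv_le_contravar; lra.
Qed.

Lemma prodF_bound lam c n m : 0 <= lam -> lam <= c -> (m <= n)%nat ->
  prodF (fun q => q / (q + c)) n m <=
  exp (- lam * (ln (INR n + 1 + lam) - ln (INR (n - m) + 1 + lam))).
Proof.
  intros Hl Hc Hm. induction m.
  - simpl. rewrite Nat.sub_0_r. replace (- lam * (ln (INR n + 1 + lam) - ln (INR n + 1 + lam))) with 0 by ring.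
    rewrite exp_0. lra.
  - simpl prodF.
    assert (Hq : 1 <= INR (n - m)) by (apply (le_INR 1); lia).
    assert (E : INR (n - S m) + 1 = INR (n - m)).
    { replace (n - m)%nat with (S (n - S m)) by lia. rewrite S_INR. reflexivity. }
    rewrite E.
    replace (- lam * (ln (INR n + 1 + lam) - ln (INR (n - m) + lam))) with
      ((- lam * (ln (INR n + 1 + lam) - ln (INR (n - m) + 1 + lam))) +
       (- lam * (ln (INR (n - m) + 1 + lam) - ln (INR (n - m) + lam)))) by ring.
    rewrite exp_plus.
    apply Rmult_le_compat.
    + apply prodF_nonneg; [lra|lia].
    + apply Rmult_le_pos; [lra|]. left; apply Rinv_0_lt_compat; lra.
    + apply IHm; lia.
    + eapply Rle_trans; [apply (ratio_mono _ lam c); lra|].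
      apply factor_bound; lra.
Qed.

Lemma part1 : forall lam : R, 0 <= lam ->
     exists M : R, forall n : nat, (1 <= n)%nat ->
       ex_series (mgf_term lam n) /\ Rabs (mgf_Z lam n) <= M.
Proof.
  intros lam Hl. exists (exp (lam * ln (1 + lam))). intros n Hn.
  split. eexists. apply mgf_series; auto.
  rewrite mgf_Z_eq by auto. rewrite prodG_eq by auto.
  pose proof (cpar_ge lam n Hn) as Hc.
  pose proof (prodF_nonneg (cpar lam n) n n ltac:(lra) (le_n n)) as H0.
  pose proof (prodF_bound lam (cpar lam n) n n Hl Hc (le_n n)) as H1.
  rewrite Nat.sub_diag in H1. simpl INR in H1. rewrite Rplus_0_l in H1.
  rewrite Rabs_pos_eq by (apply Rmult_le_pos; [left; apply exp_pos|auto]).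
  eapply Rle_trans. apply Rmult_le_compat_l. left; apply exp_pos. exact H1.
  rewrite <- exp_plus. apply exp_le.
  assert (Hn0 : 0 < INR n) by (apply lt_0_INR; lia).
  assert (ln (INR n) <= ln (INR n + 1 + lam)) by (apply ln_le; lra).
  assert (lam * ln (INR n) <= lam * ln (INR n + 1 + lam)) by (apply Rmult_le_compat_l; auto).
  lra.
Qed.

Lemma prodF_ext f g n m : (m <= n)%nat -> (forall q, 1 <= q -> f q = g q) ->
  prodF f n m = prodF g n m.
Proof.
  intros Hm H. induction m; simpl. auto.
  rewrite IHm by lia. f_equal. apply H. apply (le_INR 1). lia.
Qed.

Lemma prodF_mult f g n m : prodF (fun q => f q * g q) n m = prodF f n m * prodF g n m.
Proof. induction m; simpl. ring. rewrite IHm. ring. Qed.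

Lemma prodF_tele n m : (m <= n)%nat ->
  prodF (fun q => q / (q + 1)) n m = INR (n - m + 1) / (INR n + 1).
Proof.
  intros Hm. assert (0 <= INR n) by apply pos_INR.
  induction m; simpl.
  - rewrite Nat.sub_0_r, plus_INR. simpl. field. lra.
  - rewrite IHm by lia.
    replace (n - m + 1)%nat with (S (n - S m + 1)) by lia.
    replace (n - m)%nat with (S (n - S m)) by lia.
    rewrite !S_INR, plus_INR. simpl.
    assert (0 <= INR (n - S m)) by apply pos_INR. field. lra.
Qed.

Definition Pf (d : R) := fun q : R => / (1 + d / (q + 1)).
Definition Hf := fun q : R => / (q + 1).

Lemma P_bounds d n m : 0 <= d -> (m <= n)%nat ->
  0 <= prodF (Pf d) n m <= 1 /\
  1 - d * sumF Hf n m <= prodF (Pf d) n m /\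
  prodF (Pf d) n m * (1 + d * sumF Hf n m) <= 1 /\
  0 <= sumF Hf n m.
Proof.
  intros Hd Hm. induction m; simpl.
  - lra.
  - destruct IHm as [[A1 A2] [B [C D]]]; [lia|].
    assert (Hq : 1 <= INR (n - m)) by (apply (le_INR 1); lia).
    set (q := INR (n - m)) in *. set (P := prodF (Pf d) n m) in *.
    set (S := sumF Hf n m) in *.
    unfold Pf, Hf.
    set (a := d / (q + 1)).
    assert (Ha : 0 <= a) by (unfold a; apply Rmult_le_pos; [lra|left; apply Rinv_0_lt_compat; lra]).
    replace (d * (S + / (q + 1))) with (d * S + a) by (unfold a; field; lra).
    assert (Hi : 0 < / (1 + a)) by (apply Rinv_0_lt_compat; lra).
    assert (Hi1 : / (1 + a) <= 1) by (rewrite <- Rinv_1; apply Rinv_le_contravar; lra).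
    assert (Hi2 : 1 - a <= / (1 + a)).
    { apply Rmult_le_reg_r with (1 + a). lra. rewrite Rinv_l by lra. nra. }
    assert (HdS : 0 <= d * S) by (apply Rmult_le_pos; lra).
    assert (0 < / (q + 1)) by (apply Rinv_0_lt_compat; lra).
    repeat split.
    + apply Rmult_le_pos; lra.
    + nra.
    + nra.
    + replace (P * / (1 + a) * (1 + (d * S + a))) with (P * (1 + (d * S + a)) * / (1 + a)) by ring.
      apply Rmult_le_reg_r with (1 + a). lra. rewrite Rmult_assoc, Rinv_l by lra. nra.
    + lra.
Qed.

Lemma H_upper n m : (m <= n)%nat -> sumF Hf n m <= ln (INR n + 1) - ln (INR (n - m) + 1).
Proof.
  intros Hm. induction m; simpl.
  - rewrite Nat.sub_0_r. lra.
  - assert (Hq : 1 <= INR (n - m)) by (apply (le_INR 1); lia).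
    assert (E : INR (n - S m) + 1 = INR (n - m)).
    { replace (n - m)%nat with (S (n - S m)) by lia. rewrite S_INR. reflexivity. }
    rewrite E. unfold Hf at 2.
    pose proof (ln_diff_le (INR (n - m) + 1) (INR (n - m)) ltac:(lra) ltac:(lra)) as H1.
    replace ((INR (n - m) - (INR (n - m) + 1)) / (INR (n - m) + 1)) with (- / (INR (n - m) + 1)) in H1 by (field; lra).
    specialize (IHm ltac:(lia)). lra.
Qed.

Lemma H_lower n m : (m <= n)%nat -> ln (INR n + 2) - ln (INR (n - m) + 2) <= sumF Hf n m.
Proof.
  intros Hm. induction m; simpl.
  - rewrite Nat.sub_0_r. lra.
  - assert (Hq : 1 <= INR (n - m)) by (apply (le_INR 1); lia).
    assert (E : INR (n - S m) + 2 = INR (n - m) + 1).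
    { replace (n - m)%nat with (S (n - S m)) by lia. rewrite S_INR. ring. }
    rewrite E. unfold Hf at 2.
    pose proof (ln_diff_le (INR (n - m) + 1) (INR (n - m) + 2) ltac:(lra) ltac:(lra)) as H1.
    replace ((INR (n - m) + 2 - (INR (n - m) + 1)) / (INR (n - m) + 1)) with (/ (INR (n - m) + 1)) in H1 by (field; lra).
    specialize (IHm ltac:(lia)). lra.
Qed.

Lemma Derive_n_exp k : forall t, Derive_n exp k t = exp t.
Proof.
  induction k; intros t; simpl. reflexivity.
  rewrite (Derive_ext _ _ _ IHk). apply is_derive_unique, is_derive_exp.
Qed.

Lemma exp_upper h : 0 < h -> exp h <= 1 + h + h ^ 2 / 2 * exp h.
Proof.
  intros Hh.
  destruct (Taylor_Lagrange exp 1 0 h Hh) as [z [Hz E]].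
  - intros t _ k _. destruct k; simpl. exact I.
    eapply ex_derive_ext. intros u. symmetry. apply Derive_n_exp.
    eexists. apply is_derive_exp.
  - assert (E2 : exp h = 1 + h + h * h / 2 * exp z).
    { rewrite E at 1. cbn [sum_f_R0]. rewrite !Derive_n_exp, exp_0.
      simpl. field. }
    assert (exp z <= exp h) by (apply exp_le; lra).
    assert (0 <= h * h) by nra.
    assert (h * h / 2 * exp z <= h * h / 2 * exp h) by (apply Rmult_le_compat_l; lra).
    simpl. lra.
Qed.

Lemma delta_bounds n : (1 <= n)%nat ->
  / (2 * INR n) <= cpar 1 n - 1 <= exp (/ INR n) / (2 * INR n).
Proof.
  intros Hn. assert (HN : 1 <= INR n) by (apply (le_INR 1); lia).
  unfold cpar. replace (1 / INR n) with (/ INR n) by (field; lra).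
  assert (Hh : 0 < / INR n) by (apply Rinv_0_lt_compat; lra).
  pose proof (exp_ge_taylor (/ INR n) 2 ltac:(lra)) as L.
  cbn [sum_f_R0] in L. simpl in L.
  pose proof (exp_upper (/ INR n) Hh) as U.
  set (e := exp (/ INR n)) in *.
  split.
  - apply Rmult_le_reg_l with (2 * INR n). lra.
    rewrite Rinv_r by lra.
    replace (/ INR n * (/ INR n * 1) / (1 + 1)) with (/ INR n * / INR n / 2) in L by (field; lra).
    assert (e >= 1 + / INR n + / INR n * / INR n / 2) by lra.
    replace (2 * INR n * (INR n * (e - 1) - 1)) with (2 * INR n * INR n * (e - 1 - / INR n)) by (field; lra).
    assert (0 <= 2 * INR n * INR n) by nra.
    assert (2 * INR n * INR n * (e - 1 - / INR n) >= 2 * INR n * INR n * (/ INR n * / INR n / 2)) by nra.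
    replace (2 * INR n * INR n * (/ INR n * / INR n / 2)) with 1 in H1 by (field; lra). lra.
  - apply Rmult_le_reg_l with (2 * INR n). lra.
    replace (2 * INR n * (e / (2 * INR n))) with e by (field; lra).
    replace (2 * INR n * (INR n * (e - 1) - 1)) with (2 * INR n * INR n * (e - 1 - / INR n)) by (field; lra).
    assert (0 <= 2 * INR n * INR n) by nra.
    assert (e - 1 - / INR n <= (/ INR n) ^ 2 / 2 * e) by lra.
    assert (2 * INR n * INR n * (e - 1 - / INR n) <= 2 * INR n * INR n * ((/ INR n) ^ 2 / 2 * e)) by (apply Rmult_le_compat_l; lra).
    replace (2 * INR n * INR n * ((/ INR n) ^ 2 / 2 * e)) with e in H1 by (field; lra). lra.
Qed.
Lemma alg_bounds N L d H P e l2 : 2 <= N -> 0 < L -> 0 <= l2 <= L -> 0 <= d ->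
  1 <= 2 * N * d <= e -> L - l2 <= H <= L + / N -> 0 <= P <= 1 -> 1 - d * H <= P ->
  P * (1 + d * H) <= 1 ->
  (L - l2) / (L * (1 + e * (L + / N) / (2 * N))) <= (N / (N + 1) * P - 1) / (- L / (2 * N)) <=
  e * (L + / N) / L + 2 / L.
Proof.
  intros HN HL Hl2 Hd Hde HH HP HP1 HP2.
  assert (HiN : 0 < / N) by (apply Rinv_0_lt_compat; lra).
  assert (Hr : (N / (N + 1) * P - 1) / (- L / (2 * N)) = (1 - N / (N + 1) * P) * (2 * N / L)) by (field; lra).
  rewrite Hr.
  assert (HK : 0 < 2 * N / L) by (apply Rdiv_lt_0_compat; lra).
  assert (H0 : 0 <= H) by lra.
  assert (HdH : 0 <= d * H) by (apply Rmult_le_pos; lra).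
  assert (E1 : 1 - N / (N + 1) * P = 1 - P + P / (N + 1)) by (field; lra).
  assert (HPN : 0 <= P / (N + 1) <= 1 / (N + 1)).
  { split. apply Rmult_le_pos; [lra|left; apply Rinv_0_lt_compat; lra].
    apply Rmult_le_compat_r; [left; apply Rinv_0_lt_compat; lra|lra]. }
  split.
  -
    assert (Q1 : d * H / (1 + d * H) <= 1 - P).
    { apply Rmult_le_reg_r with (1 + d * H). lra.
      replace (d * H / (1 + d * H) * (1 + d * H)) with (d * H) by (field; lra). nra. }
    assert (Q2 : d * H / (1 + d * H) * (2 * N / L) <= (1 - N / (N + 1) * P) * (2 * N / L)).
    { apply Rmult_le_compat_r; lra. }
    eapply Rle_trans; [|exact Q2].
    replace (d * H / (1 + d * H) * (2 * N / L)) with ((2 * N * d) * H / (L * (1 + d * H))) by (field; lra).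
    assert (Q3 : L - l2 <= 2 * N * d * H) by nra.
    assert (Q4 : d * H <= e * (L + / N) / (2 * N)).
    { apply Rmult_le_reg_l with (2 * N). lra.
      replace (2 * N * (e * (L + / N) / (2 * N))) with (e * (L + / N)) by (field; lra).
      replace (2 * N * (d * H)) with ((2 * N * d) * H) by ring.
      apply Rmult_le_compat; lra. }
    unfold Rdiv. apply Rmult_le_compat; try lra.
    left. apply Rinv_0_lt_compat. nra.
    apply Rinv_le_contravar. nra. apply Rmult_le_compat_l; lra.
  -
    assert (Q1 : 1 - N / (N + 1) * P <= d * H + 1 / (N + 1)) by lra.
    apply Rle_trans with ((d * H + 1 / (N + 1)) * (2 * N / L)).
    { apply Rmult_le_compat_r; lra. }
    replace ((d * H + 1 / (N + 1)) * (2 * N / L)) with ((2 * N * d) * H / L + (2 * N / (N + 1)) / L) by (field; lra).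
    assert (Q2 : (2 * N * d) * H <= e * (L + / N)) by (apply Rmult_le_compat; lra).
    assert (Q3 : 2 * N / (N + 1) <= 2).
    { apply Rmult_le_reg_r with (N + 1). lra. unfold Rdiv. rewrite Rmult_assoc, Rinv_l by lra. lra. }
    unfold Rdiv. apply Rplus_le_compat; apply Rmult_le_compat_r; try (left; apply Rinv_0_lt_compat; lra); lra.
Qed.
Lemma lim_invN : is_lim_seq (fun n => / INR n) 0.
Proof.
  replace (Finite 0) with (Rbar_inv p_infty) by reflexivity.
  apply is_lim_seq_inv. apply is_lim_seq_INR. discriminate.
Qed.

Lemma lim_lnN : is_lim_seq (fun n => ln (INR n)) p_infty.
Proof.
  unfold is_lim_seq. eapply filterlim_comp. apply is_lim_seq_INR. apply is_lim_ln_p.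
Qed.

Lemma lim_invL : is_lim_seq (fun n => / ln (INR n)) 0.
Proof.
  replace (Finite 0) with (Rbar_inv p_infty) by reflexivity.
  apply is_lim_seq_inv. apply lim_lnN. discriminate.
Qed.

Lemma lim_LN : is_lim_seq (fun n => ln (INR n) / INR n) 0.
Proof.
  unfold is_lim_seq. eapply filterlim_comp with (f := INR) (g := fun y => ln y / y).
  apply is_lim_seq_INR. apply is_lim_div_ln_p.
Qed.

Lemma lim_e : is_lim_seq (fun n => exp (/ INR n)) 1.
Proof.
  rewrite <- exp_0. apply is_lim_seq_continuous.
  apply derivable_continuous_pt, derivable_pt_exp.
  apply lim_invN.
Qed.

Lemma lim_eqval u (a b : R) : is_lim_seq u a -> a = b -> is_lim_seq u b.
Proof. intros H <-. exact H. Qed.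

Lemma lim_up : is_lim_seq (fun n => exp (/ INR n) * (1 + / INR n * / ln (INR n)) + 2 * / ln (INR n)) 1.
Proof.
  eapply lim_eqval.
  apply is_lim_seq_plus'. apply is_lim_seq_mult'. apply lim_e.
  apply is_lim_seq_plus'. apply is_lim_seq_const. apply is_lim_seq_mult'. apply lim_invN. apply lim_invL.
  apply is_lim_seq_mult'. apply is_lim_seq_const. apply lim_invL.
  ring.
Qed.

Lemma lim_low : is_lim_seq (fun n => (1 - ln 2 * / ln (INR n)) /
   (1 + exp (/ INR n) * (ln (INR n) / INR n + / INR n * / INR n) / 2)) 1.
Proof.
  eapply lim_eqval.
  apply is_lim_seq_div'.
  apply is_lim_seq_minus'. apply is_lim_seq_const. apply is_lim_seq_mult'. apply is_lim_seq_const. apply lim_invL.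
  apply is_lim_seq_plus'. apply is_lim_seq_const.
  apply is_lim_seq_div'. apply is_lim_seq_mult'. apply lim_e.
  apply is_lim_seq_plus'. apply lim_LN. apply is_lim_seq_mult'. apply lim_invN. apply lim_invN.
  apply is_lim_seq_const. lra. lra.
  field.
Qed.

Lemma mgf1_eq n : (1 <= n)%nat ->
  mgf_Z 1 n = INR n / (INR n + 1) * prodF (Pf (cpar 1 n - 1)) n n.
Proof.
  intros Hn. assert (HN : 1 <= INR n) by (apply (le_INR 1); lia).
  pose proof (delta_bounds n Hn) as [D1 D2].
  assert (Hd : 0 < / (2 * INR n)) by (apply Rinv_0_lt_compat; lra).
  rewrite mgf_Z_eq by (lra || lia). rewrite prodG_eq by (lra || lia).
  rewrite Rmult_1_l, exp_ln by lra.
  rewrite (prodF_ext _ (fun q => q / (q + 1) * Pf (cpar 1 n - 1) q)).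
  - rewrite prodF_mult, prodF_tele by lia. rewrite Nat.sub_diag. simpl INR. field. lra.
  - lia.
  - intros q Hq. unfold Pf.
    replace (1 + (cpar 1 n - 1) / (q + 1)) with ((q + cpar 1 n) / (q + 1)) by (field; lra).
    field. split; lra.
Qed.

Theorem lemma4p4 :
  (forall lam : R, 0 <= lam ->
     exists M : R, forall n : nat, (1 <= n)%nat ->
       ex_series (mgf_term lam n) /\ Rabs (mgf_Z lam n) <= M) /\
  is_lim_seq (fun n : nat => (mgf_Z 1 n - 1) / (- ln (INR n) / (2 * INR n))) 1.
Proof.
  split. exact part1.
  eapply is_lim_seq_le_le_loc; [|exact lim_low|exact lim_up].
  exists 2%nat. intros n Hn.
  assert (HN : 2 <= INR n) by (apply (le_INR 2); lia).
  assert (Hl2 : 0 < ln 2) by (rewrite <- ln_1; apply ln_increasing; lra).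
  assert (HL2 : ln 2 <= ln (INR n)) by (apply ln_le; lra).
  pose proof (delta_bounds n ltac:(lia)) as [D1 D2].
  assert (Hd0 : 0 < / (2 * INR n)) by (apply Rinv_0_lt_compat; lra).
  set (d := cpar 1 n - 1) in *.
  set (e := exp (/ INR n)) in *.
  set (L := ln (INR n)) in *.
  assert (Hde : 1 <= 2 * INR n * d <= e).
  { split.
    - apply Rmult_le_compat_l with (r := 2 * INR n) in D1; [|lra].
      rewrite Rinv_r in D1 by lra. lra.
    - apply Rmult_le_compat_l with (r := 2 * INR n) in D2; [|lra].
      replace (2 * INR n * (e / (2 * INR n))) with e in D2 by (field; lra). lra. }
  pose proof (H_lower n n (le_n n)) as HH1. pose proof (H_upper n n (le_n n)) as HH2.
  rewrite Nat.sub_diag in HH1, HH2. simpl INR in HH1, HH2.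
  rewrite Rplus_0_l, ln_1 in HH2. rewrite Rplus_0_l in HH1.
  assert (ln (INR n) <= ln (INR n + 2)) by (apply ln_le; lra).
  pose proof (ln_diff_le (INR n) (INR n + 1) ltac:(lra) ltac:(lra)) as HL1.
  replace ((INR n + 1 - INR n) / INR n) with (/ INR n) in HL1 by (field; lra).
  fold L in HL1, H.
  pose proof (P_bounds d n n ltac:(lra) (le_n n)) as [HP1 [HP2 [HP3 _]]].
  pose proof (alg_bounds (INR n) L d (sumF Hf n n) (prodF (Pf d) n n) e (ln 2)
     HN ltac:(lra) ltac:(lra) ltac:(lra) Hde ltac:(lra) HP1 HP2 HP3) as [B1 B2].
  rewrite mgf1_eq by lia. fold d.
  split.
  - eapply Rle_trans; [|exact B1]. right. field. 
    assert (0 < e) by apply exp_pos.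
    assert (0 <= L / INR n) by (apply Rmult_le_pos; [lra|left; apply Rinv_0_lt_compat; lra]).
    assert (0 <= L * INR n) by (apply Rmult_le_pos; lra).
    assert (0 <= e * (L * INR n + 1)) by (apply Rmult_le_pos; lra).
    repeat split; try lra. nra.
  - eapply Rle_trans; [exact B2|]. right. field. lra.
Qed.
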